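(* Let $p$ be a prime and $b$ an integer with $\frac{p-1}{2}<b<p$ and $(p-b)(p-b^{-1})=2p+1$. Set $\alpha=\frac{p-b^{-1}+1}{2}$ and $\beta=\frac{p-b+1}{2}$. Then $|\mathrm{inv}_{1,b}|=5$, so $R=\mathbb{C}[y_0,\dots,y_4]$, and $$\ker\varphi_{1,b}=\langle y_2^2-y_1y_3,\ y_1^{\alpha-1}y_2-y_0y_3,\ y_3^{\beta}-y_2y_4,\ y_1^{\alpha}-y_0y_2,\ y_2y_3^{\beta-1}-y_1y_4,\ y_1^{\alpha-1}y_3^{\beta-1}-y_0y_4\rangle.$$
   Context: Let $S=\mathbb{C}[x_1,x_2]$ (standard grading), $\zeta=e^{2\pi i/p}$, $G=\mathbb{Z}/p\mathbb{Z}=\langle\zeta\rangle$ acting on $S$ by $x_1\mapsto\zeta x_1$, $x_2\mapsto\zeta^bx_2$, with invariant ring $S^G_{1,b}$ (spanned by monomials $x_1^cx_2^d$ with $c+bd\equiv0\pmod p$). $\mathrm{inv}_{1,b}$ denotes the minimal set of monomial generators of $S^G_{1,b}$ as a $\mathbb{C}$-algebra: the nonconstant invariant monomials that are not a product of two nonconstant invariant monomials. Writing $\mathrm{inv}_{1,b}=\{z_0,\dots,z_n\}$ in lexicographic order with $x_1>x_2$ (decreasing exponent of $x_1$), $R=\mathbb{C}[y_0,\dots,y_n]$ with $\deg y_i=\deg z_i$, and $\varphi_{1,b}:R\to S^G_{1,b}$ is the $\mathbb{C}$-algebra map $y_i\mapsto z_i$. $b^{-1}$ is the unique integer $0<b^{-1}<p$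 with $bb^{-1}\equiv1\pmod p$. *)

(* Defs.v *)
From HB Require Import structures.
From mathcomp Require Import all_boot all_order all_algebra.
From mathcomp Require Import complex.
From mathcomp Require Import Rstruct.
From mathcomp Require Import mpoly.
From Stdlib Require Reals.

Set Implicit Arguments.
Unset Strict Implicit.
Unset Printing Implicit Defensive.

Import GRing.Theory.
Local Open Scope ring_scope.

Definition CC : fieldType := complex Rdefinitions.R.

(* Exponent pairs (c, d) stand for monomials x1^c x2^d. *)
(* x1^c x2^d is invariant under x1 -> zeta x1, x2 -> zeta^b x2 *)
Definition invariant_mon (p b : nat) (m : nat * nat) : Prop :=
  (m.1 + b * m.2 = 0 %[mod p])%N.

Definition nonconst_mon (m : nat * nat) : Prop := m <> (0%N, 0%N).

Definition in_inv (p b : nat) (m : nat * nat) : Prop :=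
  invariant_mon p b m /\ nonconst_mon m /\
  ~ (exists m1 m2 : nat * nat,
        invariant_mon p b m1 /\ nonconst_mon m1 /\
        invariant_mon p b m2 /\ nonconst_mon m2 /\
        m = ((m1.1 + m2.1)%N, (m1.2 + m2.2)%N)).

Definition lex_gt (m m' : nat * nat) : bool :=
  (m'.1 < m.1)%N || ((m'.1 == m.1) && (m'.2 < m.2)%N).

Definition inv_enum (p b : nat) (z : seq (nat * nat)) : Prop :=
  sorted lex_gt z /\ (forall m, m \in z <-> in_inv p b m).

Definition mon2 (m : nat * nat) : {mpoly CC[2]} :=
  'X_(@Ordinal 2 0 isT) ^+ m.1 * 'X_(@Ordinal 2 1 isT) ^+ m.2.

Definition varphi (n : nat) (z : seq (nat * nat)) (f : {mpoly CC[n]})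
  : {mpoly CC[2]} :=
  f \mPo [tuple mon2 (nth (0%N, 0%N) z i) | i < n].

Definition in_ideal (T : comRingType) (gs : seq T) (f : T) : Prop :=
  exists cs : seq T, f = \sum_(i < size gs) cs`_i * gs`_i.

Definition Y (k : nat) : {mpoly CC[5]} := 'X_(@inord 4 k).

(* Main.v *)
Require Import Defs.
From HB Require Import structures.
From mathcomp Require Import all_boot all_order all_algebra.
From mathcomp Require Import mpoly.
From mathcomp Require Import zify.

Import GRing.Theory.
Local Open Scope ring_scope.

Section Ideal.
Variable T : comRingType.
Variable gs : seq T.

Lemma in_idealP f : in_ideal gs f <-> exists c : nat -> T, f = \sum_(i < size gs) c i * gs`_i.
Proof.
split=> [[cs ->]|[c ->]]; first by exists (fun i => cs`_i).
exists (mkseq c (size gs)); apply: eq_bigr => i _; by rewrite nth_mkseq.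
Qed.

Lemma ideal0 : in_ideal gs 0.
Proof. apply/in_idealP; exists (fun _ => 0); by rewrite big1 // => i _; rewrite mul0r. Qed.

Lemma idealD f g : in_ideal gs f -> in_ideal gs g -> in_ideal gs (f + g).
Proof.
move=> /in_idealP[c ->] /in_idealP[d ->]; apply/in_idealP; exists (fun i => c i + d i).
by rewrite -big_split /=; apply: eq_bigr => i _; rewrite mulrDl.
Qed.

Lemma idealM h f : in_ideal gs f -> in_ideal gs (h * f).
Proof.
move=> /in_idealP[c ->]; apply/in_idealP; exists (fun i => h * c i).
by rewrite mulr_sumr; apply: eq_bigr => i _; rewrite mulrA.
Qed.

Lemma idealN f : in_ideal gs f -> in_ideal gs (- f).
Proof. by move=> H; rewrite -mulN1r; apply: idealM. Qed.

Lemma idealG k : (k < size gs)%N -> in_ideal gs gs`_k.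
Proof.
move=> hk; apply/in_idealP; exists (fun i => (i == k)%:R).
rewrite (bigD1 (Ordinal hk)) //= eqxx mul1r big1 ?addr0 // => i hi.
have -> : (nat_of_ord i == k) = false by apply/negbTE; move: hi; rewrite -val_eqE.
by rewrite mul0r.
Qed.

End Ideal.

Lemma prodX (n : nat) (R : comRingType) (I : Type) (r : seq I) (F : I -> 'X_{1..n}) :
  \prod_(i <- r) ('X_[F i] : {mpoly R[n]}) = 'X_[\sum_(i <- r) F i].
Proof.
by rewrite (big_morph (@mpolyX n R) (@mpolyXD n R) (@mpolyX0 n R)).
Qed.

Definition t0 : 'I_2 := @Ordinal 2 0 isT.
Definition t1 : 'I_2 := @Ordinal 2 1 isT.
Definition mm (m : nat * nat) : 'X_{1..2} := (U_(t0) *+ m.1 + U_(t1) *+ m.2)%MM.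

Lemma mon2E m : mon2 m = 'X_[mm m].
Proof. by rewrite /mon2 /mm mpolyXD !mpolyXn. Qed.

Lemma mm_inj : injective mm.
Proof.
move=> [a b] [c d] /mnmP H.
have := H t0; have := H t1.
rewrite /mm /= !mnmDE !mulmnE !mnm1E /=.
move=> h1 h2; congr pair; lia.
Qed.

Lemma oeq (i j : nat) : (i < 5)%N -> (j < 5)%N -> ((inord i : 'I_5) == inord j) = (i == j).
Proof. by move=> hi hj; rewrite -val_eqE /= !inordK. Qed.

Lemma sum5 (F : 'I_5 -> nat) : (\sum_(i < 5) F i = F (inord 0) + F (inord 1) + F (inord 2) + F (inord 3) + F (inord 4))%N.
Proof.
rewrite !big_ord_recr big_ord0 /= add0n.
by congr (_ + _ + _ + _ + _); congr F; apply: val_inj; rewrite /= inordK.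
Qed.

Lemma ord5_ind (P : 'I_5 -> Prop) : P (inord 0) -> P (inord 1) -> P (inord 2) -> P (inord 3) -> P (inord 4) -> forall i, P i.
Proof.
move=> h0 h1 h2 h3 h4 i; rewrite -(inord_val i).
by case: i => [[|[|[|[|[|//]]]]] hi] /=.
Qed.

Definition mpow (m : 'X_{1..5}) (k : nat) : 'X_{1..5} := locked (m *+ k)%MM.
Lemma mpowE m k i : mpow m k i = (m i * k)%N.
Proof. by rewrite /mpow -lock mulmnE. Qed.
Lemma XmpowE m k : ('X_[mpow m k] : {mpoly CC[5]}) = 'X_[m] ^+ k.
Proof. by rewrite /mpow -lock mpolyXn. Qed.

Lemma lin_inj (p al be r0 r1 r2 r3 r4 s0 s1 s2 s3 s4 : nat) :
  (2 <= al)%N -> (2 <= be)%N -> (0 < p)%N ->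
  (p * r0 + (2*be-1) * r1 + be * r2 + r3 = p * s0 + (2*be-1) * s1 + be * s2 + s3)%N ->
  (r1 + al * r2 + (2*al-1) * r3 + p * r4 = s1 + al * s2 + (2*al-1) * s3 + p * s4)%N ->
  (r0 + (s2 + 2 * s3 + (2*be-1) * s4) = s0 + (r2 + 2 * r3 + (2*be-1) * r4))%N ->
  (al * r0 + r1 + (s3 + be * s4) = al * s0 + s1 + (r3 + be * r4))%N ->
  ((2*al-1) * r0 + 2 * r1 + r2 + s4 = (2*al-1) * s0 + 2 * s1 + s2 + r4)%N ->
  (r2 = 0 /\ r3 = 0 /\ r4 = 0) \/ (r0 = 0 /\ r3 = 0 /\ r4 = 0) \/ (r0 = 0 /\ r1 = 0 /\ r4 = 0) \/ (r0 = 0 /\ r1 = 0 /\ r2 = 0) ->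
  (s2 = 0 /\ s3 = 0 /\ s4 = 0) \/ (s0 = 0 /\ s3 = 0 /\ s4 = 0) \/ (s0 = 0 /\ s1 = 0 /\ s4 = 0) \/ (s0 = 0 /\ s1 = 0 /\ s2 = 0) ->
  r0 = s0 /\ r1 = s1 /\ r2 = s2 /\ r3 = s3 /\ r4 = s4.
Proof. move=> ha hb hp e1 e2 e3 e4 e5 hr hs.
case: hr => [[? [? ?]]|[[? [? ?]]|[[? [? ?]]|[? [? ?]]]]];
case: hs => [[? [? ?]]|[[? [? ?]]|[[? [? ?]]|[? [? ?]]]]]; subst; rewrite ?muln0 ?addn0 ?add0n in e1 e2 e3 e4 e5 *; lia.
Qed.

Lemma mcoeff_sumL n (I : Type) (r : seq I) (F : I -> {mpoly CC[n]}) m :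
  (\sum_(i <- r) F i)@_m = \sum_(i <- r) (F i)@_m.
Proof. by elim: r => [|a r IH]; rewrite ?big_nil ?mcoeff0 // !big_cons mcoeffD IH. Qed.

Section Main.
Variables x y : nat.
Local Notation p := (2 * x * y + 3 * x + 3 * y + 4)%N.
Local Notation bb := (2 * x * y + 3 * x + y + 1)%N.
Local Notation o0 := (@inord 4 0).
Local Notation o1 := (@inord 4 1).
Local Notation o2 := (@inord 4 2).
Local Notation o3 := (@inord 4 3).
Local Notation o4 := (@inord 4 4).

Definition zz : seq (nat * nat) := [:: (p, 0%N); (2 * y + 3, 1); (y.+2, x.+2); (1%N, 2 * x + 3); (0%N, p)]%N.

Definition psi (e : 'X_{1..5}) : nat * nat :=
  (p * e o0 + (2 * y + 3) * e o1 + y.+2 * e o2 + e o3,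
   e o1 + x.+2 * e o2 + (2 * x + 3) * e o3 + p * e o4)%N.

Lemma phiX e : varphi zz 'X_[e] = 'X_[mm (psi e)].
Proof.
rewrite /varphi comp_mpolyX.
under eq_bigr => i _ do rewrite tnth_mktuple mon2E mpolyXn.
rewrite prodX; congr mpolyX; apply/mnmP => j.
rewrite mnm_sumE.
under eq_bigr => i _ do rewrite mulmnE /mm mnmDE !mulmnE !mnm1E.
rewrite sum5 !inordK //=.
case: j => [[|[|//]] hj]; rewrite /mm /psi mnmDE !mulmnE !mnm1E /=.
all: lia.
Qed.

Definition G : seq {mpoly CC[5]} :=
  [:: Y 2 ^+ 2 - Y 1 * Y 3;
      Y 1 ^+ (x.+2).-1 * Y 2 - Y 0 * Y 3;
      Y 3 ^+ y.+2 - Y 2 * Y 4;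
      Y 1 ^+ x.+2 - Y 0 * Y 2;
      Y 2 * Y 3 ^+ (y.+2).-1 - Y 1 * Y 4;
      Y 1 ^+ (x.+2).-1 * Y 3 ^+ (y.+2).-1 - Y 0 * Y 4].

Definition Lm (k : nat) : 'X_{1..5} :=
  match k with
  | 0 => U_(o1) + U_(o3)
  | 1 => U_(o0) + U_(o3)
  | 2 => U_(o2) + U_(o4)
  | 3 => U_(o0) + U_(o2)
  | 4 => U_(o1) + U_(o4)
  | _ => U_(o0) + U_(o4)
  end%MM.

Definition Rm (k : nat) : 'X_{1..5} :=
  match k with
  | 0 => mpow U_(o2) 2
  | 1 => mpow U_(o1) (x.+2).-1 + U_(o2)
  | 2 => mpow U_(o3) y.+2
  | 3 => mpow U_(o1) x.+2
  | 4 => U_(o2) + mpow U_(o3) (y.+2).-1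
  | _ => mpow U_(o1) (x.+2).-1 + mpow U_(o3) (y.+2).-1
  end%MM.

Lemma G_LR k : (k < 6)%N -> G`_k = 'X_[Rm k] - 'X_[Lm k].
Proof.
by case: k => [|[|[|[|[|[|//]]]]]] _; rewrite /Rm /Lm !mpolyXD !XmpowE.
Qed.

Definition M (e : 'X_{1..5}) := ((x + y + 5) * (e o0 + e o4) + (e o1 + e o3))%N.

Lemma step k e' : (k < 6)%N ->
  psi (e' + Rm k) = psi (e' + Lm k) /\ (M (e' + Rm k) < M (e' + Lm k))%N /\
  in_ideal G ('X_[e' + Lm k] - 'X_[e' + Rm k]).
Proof.
move=> hk; split; [|split].
- case: k hk => [|[|[|[|[|[|//]]]]]] _;
  rewrite /psi /Rm /Lm !mnmDE ?mpowE !mnm1E !oeq //=; congr (_, _); lia.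
- case: k hk => [|[|[|[|[|[|//]]]]]] _;
  rewrite /M /Rm /Lm !mnmDE ?mpowE !mnm1E !oeq //=; lia.
- rewrite (mpolyXD _ e' (Lm k)) (mpolyXD _ e' (Rm k)) -mulrBr; apply: idealM.
  rewrite -opprB -G_LR //; apply: idealN; apply: idealG; by [].
Qed.

Definition reduced (r : 'X_{1..5}) := all (fun k => ~~ (Lm k <= r)%MM) (iota 0 6).

Lemma reduce_ex e : exists r, reduced r /\ psi r = psi e /\ in_ideal G ('X_[e] - 'X_[r]).
Proof.
suff H : forall N e, (M e <= N)%N -> exists r, reduced r /\ psi r = psi e /\ in_ideal G ('X_[e] - 'X_[r]).
  exact: (H (M e)).
elim=> [|N IH] {}e hM; (case: (boolP (reduced e)) => hred;
  first by exists e; split; [done | split; [done | rewrite subrr; apply: ideal0]]);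
  move/allPn: hred => [k]; rewrite mem_iota add0n => /andP[_ hk] /negbNE hle;
  move: (e - Lm k)%MM (submK hle) => e' Ee;
  have [hpsi [hMlt hid]] := step k e' hk; rewrite Ee in hpsi hMlt hid.
- lia.
- have [r [hr [hpr hir]]] := IH (e' + Rm k)%MM ltac:(lia).
  exists r; split; first done; split; first by rewrite hpr.
  by rewrite -(subrK 'X_[e' + Rm k] 'X_[e]) -addrA; apply: idealD.
Qed.

Lemma red_pair k r : (k < 6)%N -> reduced r -> ~~ (Lm k <= r)%MM.
Proof. by move=> hk /allP; apply; rewrite mem_iota. Qed.

Ltac redk k r hr :=
  let a := fresh in let b := fresh in let hle := fresh in
  match goal with |- (?P = _) \/ (?Q = _) =>
  (case: (posnP P) => [a|a]; [by left|]);
  (case: (posnP Q) => [b|b]; [by right|]);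
  exfalso; have hle : (Lm k <= r)%MM;
  [apply/mnm_lepP; apply: ord5_ind; rewrite /Lm mnmDE !mnm1E !oeq //=; lia
  | by move: (red_pair k r isT hr); rewrite hle]
  end.

Lemma sector r : reduced r ->
  (r o2 = 0 /\ r o3 = 0 /\ r o4 = 0) \/ (r o0 = 0 /\ r o3 = 0 /\ r o4 = 0) \/
  (r o0 = 0 /\ r o1 = 0 /\ r o4 = 0) \/ (r o0 = 0 /\ r o1 = 0 /\ r o2 = 0).
Proof.
move=> hr.
have h0 : r o1 = 0%N \/ r o3 = 0%N by redk 0%N r hr.
have h1 : r o0 = 0%N \/ r o3 = 0%N by redk 1%N r hr.
have h2 : r o2 = 0%N \/ r o4 = 0%N by redk 2%N r hr.
have h3 : r o0 = 0%N \/ r o2 = 0%N by redk 3%N r hr.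
have h4 : r o1 = 0%N \/ r o4 = 0%N by redk 4%N r hr.
have h5 : r o0 = 0%N \/ r o4 = 0%N by redk 5%N r hr.
lia.
Qed.

Lemma inj_red r s : reduced r -> reduced s -> psi r = psi s -> r = s.
Proof.
move=> hr hs E.
have I1 m : ((2*y+3) * (psi m).2 + p * m o0 = (psi m).1 + p * (m o2 + 2 * m o3 + (2*y+3) * m o4))%N.
  rewrite /psi /=; lia.
have I2 m : ((y.+2) * (psi m).2 + p * (x.+2 * m o0 + m o1) = x.+2 * (psi m).1 + p * (m o3 + y.+2 * m o4))%N.
  rewrite /psi /=; lia.
have I3 m : ((psi m).2 + p * ((2*x+3) * m o0 + 2 * m o1 + m o2) = (2*x+3) * (psi m).1 + p * m o4)%N.
  rewrite /psi /=; lia.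
have pp : (0 < p)%N by lia.
have e3 : (r o0 + (s o2 + 2 * s o3 + (2*(y.+2)-1) * s o4) = s o0 + (r o2 + 2 * r o3 + (2*(y.+2)-1) * r o4))%N.
  apply/eqP; rewrite -(eqn_pmul2l pp); apply/eqP.
  have := I1 r; have := I1 s; rewrite E; lia.
have e4 : (x.+2 * r o0 + r o1 + (s o3 + y.+2 * s o4) = x.+2 * s o0 + s o1 + (r o3 + y.+2 * r o4))%N.
  apply/eqP; rewrite -(eqn_pmul2l pp); apply/eqP.
  have := I2 r; have := I2 s; rewrite E; lia.
have e5 : ((2*(x.+2)-1) * r o0 + 2 * r o1 + r o2 + s o4 = (2*(x.+2)-1) * s o0 + 2 * s o1 + s o2 + r o4)%N.
  apply/eqP; rewrite -(eqn_pmul2l pp); apply/eqP.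
  have := I3 r; have := I3 s; rewrite E; lia.
move: E; rewrite /psi => -[e1 e2].
have [q0 [q1 [q2 [q3 q4]]]] := @lin_inj p x.+2 y.+2 (r o0) (r o1) (r o2) (r o3) (r o4) (s o0) (s o1) (s o2) (s o3) (s o4)
  isT isT pp ltac:(lia) ltac:(lia) e3 e4 e5 (sector _ hr) (sector _ hs).
by apply/mnmP; elim/ord5_ind.
Qed.

Lemma phiG k : (k < 6)%N -> varphi zz G`_k = 0.
Proof.
move=> hk; rewrite G_LR //.
have [hp _] := step k 0%MM hk; rewrite !add0m in hp.
move: (phiX (Rm k)) (phiX (Lm k)); rewrite /varphi raddfB /= => -> ->.
by rewrite hp subrr.
Qed.

Lemma phi_ideal f : in_ideal G f -> varphi zz f = 0.
Proof.
move=> /in_idealP[c ->]; rewrite /varphi rmorph_sum big1 // => i _.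
rewrite rmorphM /=.
have := phiG _ (ltn_ord i); rewrite /varphi => ->.
by rewrite mulr0.
Qed.

Lemma support f : exists g : {mpoly CC[5]},
  (forall m, ~~ reduced m -> g@_m = 0) /\ in_ideal G (f - g).
Proof.
elim/mpolyind: f => [|c m f _ _ [g [hg hid]]].
  by exists 0; split => [m _|]; rewrite ?mcoeff0 // subrr; apply: ideal0.
have [r [hr [_ hir]]] := reduce_ex m.
exists (c *: 'X_[r] + g); split.
  move=> m0 hm0; rewrite mcoeffD mcoeffZ mcoeffX hg //.
  have -> : (r == m0) = false by apply/negP => /eqP E; move: hm0; rewrite -E hr.
  by rewrite mulr0 addr0.
have -> : c *: 'X_[m] + f - (c *: 'X_[r] + g) = c%:MP * ('X_[m] - 'X_[r]) + (f - g).
  by rewrite mul_mpolyC scalerBr opprD !addrA; congr (_ + _); rewrite -!addrA; congr (_ + _); rewrite addrC.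
by apply: idealD => //; apply: idealM.
Qed.

Lemma inj_zero g : (forall m, ~~ reduced m -> g@_m = 0) -> varphi zz g = 0 -> g = 0.
Proof.
move=> hg hphi; apply/mpolyP => m0; rewrite mcoeff0.
case: (boolP (reduced m0)) => hm0; last by apply: hg.
have E : g@_m0 = \sum_(m <- msupp g) g@_m * (m == m0)%:R.
  by rewrite {1}[g]mpolyE mcoeff_sumL; apply: eq_bigr => m _; rewrite mcoeffZ mcoeffX.
have := congr1 (mcoeff (mm (psi m0))) hphi.
rewrite mcoeff0 /varphi comp_mpolyEX mcoeff_sumL => H.
rewrite E; apply: (etrans _ H); apply: eq_big_seq => m hm.
have hmr : reduced m.
  apply/negP => /negP hn; move: hm; rewrite mcoeff_msupp hg //; by rewrite eqxx.
move: (phiX m); rewrite /varphi => ->.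
rewrite mcoeffZ mcoeffX.
have -> : (mm (psi m) == mm (psi m0)) = (m == m0).
  apply/idP/idP => [/eqP/mm_inj HH|/eqP -> //].
  apply/eqP; exact: inj_red hmr hm0 HH.
by [].
Qed.

Lemma kernel_iff f : varphi zz f = 0 <-> in_ideal G f.
Proof.
split; last exact: phi_ideal.
move=> hf; have [g [hg hid]] := support f.
have hg0 : varphi zz g = 0.
  have := phi_ideal _ hid; rewrite /varphi raddfB /=.
  by move: hf; rewrite /varphi => ->; rewrite sub0r => /eqP; rewrite oppr_eq0 => /eqP.
by move: hid; rewrite (inj_zero _ hg hg0) subr0.
Qed.

Lemma inv_dvd (q b : nat) m : invariant_mon q b m <-> (q %| m.1 + b * m.2)%N.
Proof. by rewrite /invariant_mon mod0n; split => /eqP. Qed.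

Lemma box c d : prime p -> (p %| c + bb * d)%N -> (c, d) <> (0%N, 0%N) ->
  exists k, (k < 5)%N /\ ((nth (0%N,0%N) zz k).1 <= c)%N /\ ((nth (0%N,0%N) zz k).2 <= d)%N.
Proof.
move=> hpr /dvdnP [k Hk] hnz.
case: (posnP d) => [d0|dpos].
  subst d; case: k Hk => [|k] Hk.
    by exfalso; apply: hnz; congr pair; lia.
  by exists 0%N; rewrite /=; rewrite mulSn in Hk; lia.
case: (posnP c) => [c0|cpos].
  have : (p %| bb * d)%N by apply/dvdnP; exists k; lia.
  rewrite Euclid_dvdM // => /orP[/dvdn_leq|/dvdn_leq].
    by move=> H; exfalso; have := H ltac:(lia); lia.
  by move=> H; exists 4%N; rewrite /=; have := H dpos; lia.
case: (leqP (2 * y + 3) c) => hc.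
  by exists 1%N; rewrite /=; lia.
case: (leqP (2 * x + 3) d) => hd.
  by exists 3%N; rewrite /=; lia.
have pp : (0 < p)%N by lia.
have E1 : (c + p * d = p * k + (2 * y + 3) * d)%N by lia.
have hud : (2 * y + 3 <= (2 * y + 3) * d)%N by rewrite leq_pmulr.
have hkd : (k < d)%N.
  rewrite ltnNge; apply/negP => hdk.
  have : (p * d <= p * k)%N by rewrite leq_mul2l hdk orbT.
  lia.
move: (d - k)%N (subnKC (ltnW hkd)) => A hA.
have F1 : (c + p * A = (2 * y + 3) * d)%N.
  rewrite -hA in E1; lia.
have E2 : (c * (2 * x + 3) + p * (d * (2 * x + 1)) = p * (k * (2 * x + 3)) + d)%N.
  have := congr1 (muln (2 * x + 3)) Hk; lia.
have hcv : (2 * x + 3 <= c * (2 * x + 3))%N by rewrite leq_pmull.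
have hWQ : (d * (2 * x + 1) < k * (2 * x + 3))%N.
  rewrite ltnNge; apply/negP => hle.
  have : (p * (k * (2 * x + 3)) <= p * (d * (2 * x + 1)))%N by rewrite leq_mul2l hle orbT.
  lia.
move: (k * (2 * x + 3) - d * (2 * x + 1))%N (subnKC (ltnW hWQ)) => B hB.
have F2 : (c * (2 * x + 3) = p * B + d)%N.
  rewrite -hB in E2; lia.
have G1 : (2 * c = (2 * y + 3) * B + A)%N.
  apply/eqP; rewrite -(eqn_pmul2l pp); apply/eqP.
  have := congr1 (muln (2 * y + 3)) F2; lia.
have G2 : (2 * d = B + (2 * x + 3) * A)%N.
  apply/eqP; rewrite -(eqn_pmul2l pp); apply/eqP.
  have := congr1 (muln (2 * x + 3)) F1; lia.
have hA0 : (0 < A)%N by lia.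
have hB0 : (0 < B)%N by lia.
have hB1 : B = 1%N.
  apply/eqP; rewrite eqn_leq hB0 andbT leqNgt; apply/negP => hB2.
  have : ((2 * y + 3) * 2 <= (2 * y + 3) * B)%N by rewrite leq_mul2l hB2 orbT.
  lia.
have hA1 : A = 1%N.
  apply/eqP; rewrite eqn_leq hA0 andbT leqNgt; apply/negP => hA2.
  have : ((2 * x + 3) * 2 <= (2 * x + 3) * A)%N by rewrite leq_mul2l hA2 orbT.
  lia.
by exists 2%N; rewrite /=; lia.
Qed.

Lemma antichain j k : (j < 5)%N -> (k < 5)%N ->
  ((nth (0%N,0%N) zz j).1 <= (nth (0%N,0%N) zz k).1)%N ->
  ((nth (0%N,0%N) zz j).2 <= (nth (0%N,0%N) zz k).2)%N -> j = k.
Proof.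
by case: j => [|[|[|[|[|//]]]]] _; case: k => [|[|[|[|[|//]]]]] _ /=; lia.
Qed.

Lemma z_inv k : (k < 5)%N -> (p %| (nth (0%N,0%N) zz k).1 + bb * (nth (0%N,0%N) zz k).2)%N.
Proof.
case: k => [|[|[|[|[|//]]]]] _ /=; apply/dvdnP.
- by exists 1%N; lia.
- by exists 1%N; lia.
- by exists x.+1; lia.
- by exists (2 * x + 1)%N; lia.
- by exists bb; lia.
Qed.

Lemma z_nc k : (k < 5)%N -> nonconst_mon (nth (0%N,0%N) zz k).
Proof. by case: k => [|[|[|[|[|//]]]]] _ /= [] //; lia. Qed.

Lemma memz m : m \in zz <-> exists k, (k < 5)%N /\ m = nth (0%N,0%N) zz k.
Proof.
split => [hm|[k [hk ->]]]; last by apply: mem_nth.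
by exists (index m zz); split; [rewrite -[5%N]/(size zz) index_mem | rewrite nth_index].
Qed.

Lemma main_sec : prime p -> size zz = 5%N /\ inv_enum p bb zz.
Proof.
move=> hpr; split; first by [].
split.
  rewrite /= /lex_gt /=; lia.
move=> m; split.
- move/memz => [k [hk ->]]; split; first by apply/inv_dvd; apply: z_inv.
  split; first exact: z_nc.
  move=> [[a1 b1] [[a2 b2] [/inv_dvd i1 [n1 [i2 [n2 E]]]]]].
  have [j [hj [hj1 hj2]]] := box a1 b1 hpr i1 n1.
  move: E; case E' : (nth (0%N, 0%N) zz k) => [c d] /= [hc hd].
  have hjk : j = k by apply: antichain => //; rewrite E' /=; lia.
  subst j; rewrite E' /= in hj1 hj2.
  by apply: n2; congr pair; lia.
- move=> [/inv_dvd hi [hnc hnd]].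
  case: m hi hnc hnd => c d hi hnc hnd.
  have [j [hj [hj1 hj2]]] := box c d hpr hi hnc.
  case: (boolP ((c, d) == nth (0%N, 0%N) zz j)) => [/eqP ->|hne].
    by apply/memz; exists j.
  exfalso; apply: hnd.
  exists (nth (0%N, 0%N) zz j), ((c - (nth (0%N, 0%N) zz j).1)%N, (d - (nth (0%N, 0%N) zz j).2)%N).
  split; first by apply/inv_dvd; apply: z_inv.
  split; first exact: z_nc.
  split.
    apply/inv_dvd => /=.
    have hz := z_inv _ hj.
    rewrite -(dvdn_addr _ hz).
    have -> : ((nth (0%N, 0%N) zz j).1 + bb * (nth (0%N, 0%N) zz j).2 +
      ((c - (nth (0%N, 0%N) zz j).1) + bb * (d - (nth (0%N, 0%N) zz j).2)) = c + bb * d)%N.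
      move: hj1 hj2; case: (nth (0%N, 0%N) zz j) => [a b] /= h1 h2.
      rewrite mulnBr; have : (bb * b <= bb * d)%N by rewrite leq_mul2l h2 orbT.
      lia.
    exact: hi.
  split.
    move=> /= [h1 h2]; move: hne; case: (nth (0%N, 0%N) zz j) hj1 hj2 h1 h2 => [a b] /= h1 h2 h3 h4.
    have -> : c = a by lia.
    have -> : d = b by lia.
    by rewrite eqxx.
  move: hj1 hj2; case: (nth (0%N, 0%N) zz j) => [a b] /= h1 h2.
  congr pair; lia.
Qed.

End Main.
Theorem proposition5p5 (p b : nat) :
  prime p ->
  (2 * b > p.-1)%N -> (b < p)%N ->
  forall binv : nat, (0 < binv < p)%N -> (b * binv = 1 %[mod p])%N ->
  ((p - b) * (p - binv) = 2 * p + 1)%N ->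
  let alpha := ((p - binv + 1) %/ 2)%N in
  let beta := ((p - b + 1) %/ 2)%N in
  exists z : seq (nat * nat),
    size z = 5%N /\ inv_enum p b z /\
    forall f : {mpoly CC[5]},
      varphi z f = 0 <->
      in_ideal
        [:: Y 2 ^+ 2 - Y 1 * Y 3;
            Y 1 ^+ alpha.-1 * Y 2 - Y 0 * Y 3;
            Y 3 ^+ beta - Y 2 * Y 4;
            Y 1 ^+ alpha - Y 0 * Y 2;
            Y 2 * Y 3 ^+ beta.-1 - Y 1 * Y 4;
            Y 1 ^+ alpha.-1 * Y 3 ^+ beta.-1 - Y 0 * Y 4] f.
Proof.
move=> hpr h2b hbp binv /andP[hbi0 hbip] hinv huv alpha beta.
have /andP[ou ov] : odd (p - b) && odd (p - binv) by rewrite -oddM huv addn1 /= oddM.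
have Hu := odd_double_half (p - b); rewrite ou -muln2 in Hu.
have Hv := odd_double_half (p - binv); rewrite ov -muln2 in Hv.
move: ((p - b)./2) Hu => y' Hu.
move: ((p - binv)./2) Hv => x' Hv.
rewrite -Hu -Hv in huv.
have hp2 : (1 < p)%N by apply: prime_gt1.
case: x' Hv huv => [|x] Hv huv; first lia.
case: y' Hu huv => [|y] Hu huv; first lia.
have hp : p = (2 * x * y + 3 * x + 3 * y + 4)%N by lia.
have hb : b = (2 * x * y + 3 * x + y + 1)%N by lia.
have hal : alpha = x.+2 by rewrite /alpha; lia.
have hbe : beta = y.+2 by rewrite /beta; lia.
rewrite hal hbe.
rewrite hp hb.
have hpr' : prime (2 * x * y + 3 * x + 3 * y + 4)%N by rewrite -hp.
have [hs hie] := main_sec x y hpr'.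
exists (zz x y); split; first exact: hs.
split; first exact: hie.
move=> f; exact: kernel_iff.
Qed.
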